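(* Let $\mathcal{B}$ be a real Banach space having a pre-dual space $\mathcal{B}_*$, let $\nu_j\in\mathcal{B}_*$, $j\in\mathbb{N}_m$, be linearly independent and let $\mathbf{y}\in\mathbb{R}^m$. Then $\hat f\in\mathcal{B}$ is a solution of the minimum norm interpolation problem with data $\mathbf{y}$ if and only if $\hat f\in\mathcal{M}_{\mathbf{y}}$ and there exist $c_j\in\mathbb{R}$, $j\in\mathbb{N}_m$, such that $$\hat f\in\gamma\,\partial\|\cdot\|_{\mathcal{B}_*}\Big(\sum_{j\in\mathbb{N}_m}c_j\nu_j\Big),\qquad \gamma:=\Big\|\sum_{j\in\mathbb{N}_m}c_j\nu_j\Big\|_{\mathcal{B}_*}.$$
   Context: $\mathcal{B}$ is a real Banach space with dual $\mathcal{B}^*$ and pairing $\langle\nu,f\rangle_{\mathcal{B}}:=\nu(f)$; $\mathbb{N}_m:=\{1,\dots,m\}$; $\mathcal{L}(f):=[\langle\nu_j,f\rangle_{\mathcal{B}}:j\in\mathbb{N}_m]$, $\mathcal{M}_{\mathbf{y}}:=\{f\in\mathcal{B}:\mathcal{L}(f)=\mathbf{y}\}$; a solution of the minimum norm interpolation problem with data $\mathbf{y}$ is an $\hat f\in\mathcal{M}_{\mathbf{y}}$ with $\|\hat f\|_{\mathcal{B}}=\inf\{\|f\|_{\mathcal{B}}:f\in\mathcal{M}_{\mathbf{y}}\}$. A normed space $\mathcal{B}_*$ is a pre-dual space of $\mathcal{B}$ if $(\mathcal{B}_* )^*=\mathcal{B}$; $\mathcal{B}_*$ is regarded as a subspace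 of $\mathcal{B}^*$ via $\langle\nu,f\rangle_{\mathcal{B}}=\langle f,\nu\rangle_{\mathcal{B}_*}=f(\nu)$. For a convex $\phi$ on a real normed space $X$, $\partial\phi(x):=\{\mu\in X^*:\phi(z)-\phi(x)\ge\mu(z-x)\ \forall z\in X\}$; thus $\partial\|\cdot\|_{\mathcal{B}_*}(\nu)\subseteq\mathcal{B}$. *)

(* Defs.v *)
From HB Require Import structures.
From mathcomp Require Import all_boot all_order all_algebra.
From mathcomp Require Import all_classical all_reals all_analysis.
Set Implicit Arguments. Unset Strict Implicit. Unset Printing Implicit Defensive.
Import Order.TTheory GRing.Theory Num.Theory.
Import numFieldNormedType.Exports.
Local Open Scope classical_set_scope.
Local Open Scope ring_scope.

(* The Banach space B is realized as the (topological) dual of its pre-dual X: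
   B := { f : X -> R | f linear and continuous }, with the dual (operator) norm.
   The pairing <f, nu>_{B_*} = f nu. *)

Definition dual_space {R : realType} (X : normedModType R) : set (X -> R) :=
  [set f | (forall (a : R) (x y : X), f (a *: x + y) = a * f x + f y)
           /\ continuous f].
Arguments dual_space {R} X _.

Definition dual_norm (R : realType) (X : normedModType R) (f : X -> R) : R :=
  sup [set `|f x| | x in [set x : X | `|x| <= 1]].

Definition interp_set (R : realType) (X : normedModType R) (m : nat)
  (nu : 'I_m -> X) (y : 'I_m -> R) : set (X -> R) :=
  [set f | dual_space X f /\ forall j, f (nu j) = y j].

Definition is_mni_solution (R : realType) (X : normedModType R) (m : nat)
  (nu : 'I_m -> X) (y : 'I_m -> R) (fhat : X -> R) : Prop :=
  interp_set nu y fhat /\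
  dual_norm fhat = inf [set dual_norm g | g in interp_set nu y].

Definition subdiff {R : realType} {X : normedModType R} (phi : X -> R) (x : X)
  : set (X -> R) :=
  [set mu | dual_space X mu /\ forall z : X, mu (z - x) <= phi z - phi x].

Definition lin_indep (R : realType) (X : normedModType R) (m : nat)
  (nu : 'I_m -> X) : Prop :=
  forall c : 'I_m -> R, \sum_(j < m) c j *: nu j = 0 -> forall j, c j = 0.

(* Main.v *)
Require Import Defs.
From HB Require Import structures.
From mathcomp Require Import all_boot all_order all_algebra.
From mathcomp Require Import all_classical all_reals all_analysis.
From mathcomp Require Import ring lra.
Import Order.TTheory GRing.Theory Num.Theory.
Import numFieldNormedType.Exports.
Local Open Scope classical_set_scope.
Local Open Scope ring_scope.
Set Implicit Arguments. Unset Strict Implicit. Unset Printing Implicit Defensive.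

Lemma ds_lin {R : realType} {X : normedModType R} (f : X -> R) :
  dual_space X f -> forall a x y, f (a *: x + y) = a * f x + f y.
Proof. by case. Qed.

Lemma ds0 {R : realType} {X : normedModType R} (f : X -> R) :
  dual_space X f -> f 0 = 0.
Proof.
move=> /ds_lin h; have := h 1 0 0; rewrite scale1r addr0 mul1r => /eqP.
by rewrite -subr_eq subrr eq_sym => /eqP.
Qed.

Lemma dsD {R : realType} {X : normedModType R} (f : X -> R) :
  dual_space X f -> forall x y, f (x + y) = f x + f y.
Proof. by move=> hf x y; rewrite -[x]scale1r (ds_lin hf) mul1r scale1r. Qed.

Lemma dsZ {R : realType} {X : normedModType R} (f : X -> R) :
  dual_space X f -> forall a x, f (a *: x) = a * f x.
Proof. by move=> hf a x; rewrite -[a *: x]addr0 (ds_lin hf) (ds0 hf) addr0. Qed.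

Lemma dsN {R : realType} {X : normedModType R} (f : X -> R) :
  dual_space X f -> forall x, f (- x) = - f x.
Proof. by move=> hf x; rewrite -scaleN1r (dsZ hf) mulN1r. Qed.

Lemma dsB {R : realType} {X : normedModType R} (f : X -> R) :
  dual_space X f -> forall x y, f (x - y) = f x - f y.
Proof. by move=> hf x y; rewrite (dsD hf) (dsN hf). Qed.

Lemma ds_bounded {R : realType} {X : normedModType R} (f : X -> R) :
  dual_space X f -> exists2 k, 0 < k & forall x, `|f x| <= k * `|x|.
Proof.
move=> hf; have c0 := (hf.2 0).
have h := @cvgr_dist_lt _ _ _ _ _ f (f 0) c0 1 ltr01.
have {}h := h (nbhs_filter 0); rewrite (ds0 hf) in h.
have [e e0 he] := (iffLR (nbhs_ballP _ _)) h.
exists (2 / e); first by rewrite divr_gt0.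
move=> x; have [->|x0] := eqVneq x 0; first by rewrite (ds0 hf) !normr0 mulr0.
have nx : 0 < `|x| by rewrite normr_gt0.
pose z := (e / 2 / `|x|) *: x.
have : ball (0:X) e z.
  rewrite -ball_normE /ball_ /= sub0r normrN normrZ ger0_norm; last first.
    by rewrite divr_ge0 // divr_ge0 // ltW.
  by rewrite divfK ?gt_eqF // ltr_pdivrMr // ltr_pMr // ltr1n.
move/he; rewrite /= sub0r normrN /z (dsZ hf) normrM ger0_norm; last first.
  by rewrite divr_ge0 // divr_ge0 // ltW.
move=> hz; rewrite -ler_pdivrMl ?divr_gt0 // invf_div.
have -> : e / 2 * `|f x| = (e / 2 / `|x| * `|f x|) * `|x|.
  by field; rewrite gt_eqF.
by rewrite -[leRHS]mul1r ler_pM2r // ltW.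
Qed.

Lemma dn_has_sup {R : realType} {X : normedModType R} (f : X -> R) :
  dual_space X f -> has_sup [set `|f x| | x in [set x : X | `|x| <= 1]].
Proof.
move=> hf; have [k k0 hk] := ds_bounded hf; split.
  by exists `|f 0|, 0 => //=; rewrite normr0.
exists k => _ [x /= x1 <-]; apply: le_trans (hk x) _.
by rewrite -[leRHS]mulr1 ler_pM2l.
Qed.

Lemma dn_le {R : realType} {X : normedModType R} (f : X -> R) (b : R) :
  (forall x : X, `|x| <= 1 -> `|f x| <= b) -> dual_norm f <= b.
Proof.
move=> h; apply: ge_sup; first by exists `|f 0|, 0 => //=; rewrite normr0.
by move=> _ [x /= x1 <-]; exact: h.
Qed.

Lemma dn_ub {R : realType} {X : normedModType R} (f : X -> R) :
  dual_space X f -> forall x : X, `|x| <= 1 -> `|f x| <= dual_norm f.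
Proof. by move=> hf x x1; apply: sup_upper_bound (dn_has_sup hf) _ _; exists x. Qed.

Lemma dn_ge0 {R : realType} {X : normedModType R} (f : X -> R) :
  dual_space X f -> 0 <= dual_norm f.
Proof. by move=> hf; apply: le_trans (dn_ub hf (x:=0) _); rewrite ?normr0. Qed.

Lemma dn_bound {R : realType} {X : normedModType R} (f : X -> R) :
  dual_space X f -> forall x : X, `|f x| <= dual_norm f * `|x|.
Proof.
move=> hf x; have [->|x0] := eqVneq x 0; first by rewrite (ds0 hf) !normr0 mulr0.
have nx : 0 < `|x| by rewrite normr_gt0.
have xi : 0 <= `|x|^-1 by rewrite invr_ge0 ltW.
have := dn_ub hf (x := `|x|^-1 *: x); rewrite normrZ ger0_norm //.
rewrite mulVf ?gt_eqF // lexx (dsZ hf) normrM ger0_norm //.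
by move=> /(_ isT); rewrite ler_pdivrMl // mulrC.
Qed.


Definition Good {R : realType} {X : normedModType R} (s : R) (G : set (X * R)) :=
  [/\ (forall a p q, G p -> G q -> G (a *: p.1 + q.1, a * p.2 + q.2)),
      G (0, 0), (forall r, G (0, r) -> r = 0) &
      (forall p, G p -> p.2 <= s * `|p.1|)].

Lemma GoodZ {R : realType} {X : normedModType R} (s : R) (G : set (X * R)) :
  Good s G -> forall a d r, G (d, r) -> G (a *: d, a * r).
Proof.
by case=> lin G00 _ _ a d r h; have := lin a _ _ h G00; rewrite /= !addr0.
Qed.

Lemma GoodU {R : realType} {X : normedModType R} (s : R) (G : set (X * R)) :
  Good s G -> forall d r1 r2, G (d, r1) -> G (d, r2) -> r1 = r2.
Proof.
case=> lin G00 fn _ d r1 r2 h1 h2.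
have := lin (-1) _ _ h1 h2; rewrite /= scaleN1r addNr mulN1r => /fn /eqP.
by rewrite addrC subr_eq0 => /eqP.
Qed.

Lemma HB_step {R : realType} {X : normedModType R} (s : R) (A : set (X * R)) (x0 : X) :
  0 <= s -> Good s A -> ~ (exists r, A (x0, r)) ->
  exists B, [/\ Good s B, A `<=` B & ~ (B `<=` A)].
Proof.
move=> s0 hA nx0; have [lin A00 fn dom] := hA.
pose L := [set p.2 - s * `|p.1 - x0| | p in A].
have key p q : A p -> A q -> p.2 - s * `|p.1 - x0| <= s * `|q.1 + x0| - q.2.
  move=> Ap Aq; have := dom _ (lin 1 p q Ap Aq); rewrite /= scale1r mul1r.
  have : `|p.1 + q.1| <= `|p.1 - x0| + `|q.1 + x0|.
    by apply: le_trans (ler_normD _ _); rewrite addrACA addNr addr0.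
  move=> /(ler_wpM2l s0) h1 h2; have := le_trans h2 h1; rewrite mulrDr.
  move=> h3; lra.
have hsup : has_sup L.
  split; first by exists (0 - s * `|0 - x0|), (0, 0).
  by exists (s * `|0 + x0| - 0) => _ [p Ap <-]; exact: key Ap A00.
pose c := sup L.
have hc1 p : A p -> p.2 - s * `|p.1 - x0| <= c.
  by move=> Ap; apply: sup_upper_bound hsup _ _; exists p.
have hc2 q : A q -> c <= s * `|q.1 + x0| - q.2.
  move=> Aq; apply: ge_sup; first by exists (0 - s * `|0 - x0|), (0, 0).
  by move=> _ [p Ap <-]; exact: key.
pose B := [set z | exists p t, A p /\ z = (p.1 + t *: x0, p.2 + t * c)].
have AB : A `<=` B.
  by move=> [d r] h; exists (d, r), 0; rewrite /= scale0r mul0r !addr0.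
exists B; split => //; last first.
  move=> BA; apply: nx0; exists c; apply: BA; exists (0, 0), 1.
  by rewrite /= scale1r mul1r !add0r.
split.
- move=> a _ _ [p1 [t1 [A1 ->]]] [p2 [t2 [A2 ->]]].
  exists (a *: p1.1 + p2.1, a * p1.2 + p2.2), (a * t1 + t2); split.
    exact: lin.
  rewrite /=; congr pair; last by ring.
  rewrite scalerDr scalerA scalerDl addrACA.
  by rewrite -!addrA; congr (_ + _); rewrite addrCA.
- by apply: AB.
- move=> r [[d r0] [t [Ap [e1 e2]]]].
  have [t0|tn0] := eqVneq t 0.
    move: e1 e2; rewrite t0 scale0r mul0r !addr0 /= => e1 ->.
    by apply: fn; rewrite e1.
  exfalso; apply: nx0; exists (- t^-1 * r0).
  have -> : x0 = - t^-1 *: d.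
    apply: (scalerI tn0); rewrite scalerA mulrN divff // scaleN1r.
    by apply/eqP; rewrite -addr_eq0 addrC -e1.
  exact: (GoodZ hA).
- move=> _ [[d r] [t [Ap ->]]] /=.
  have [tgt|tlt|->] := ltgtP t 0; last by rewrite scale0r mul0r !addr0; exact: (dom _ Ap).
  + pose u := - t.
    have u0 : 0 < u by rewrite oppr_gt0.
    have tu : t = - u by rewrite /u opprK.
    have := hc1 _ ((GoodZ hA) u^-1 _ _ Ap); rewrite /=.
    set N := `|u^-1 *: d - x0| => h.
    have e : d + t *: x0 = u *: (u^-1 *: d - x0).
      by rewrite scalerBr scalerA divff ?gt_eqF // scale1r tu scaleNr.
    rewrite e normrZ gtr0_norm // -/N.
    have h' := ler_wpM2l (ltW u0) h.
    rewrite mulrBr mulrA divff ?gt_eqF // mul1r in h'.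
    rewrite (_ : u * (s * N) = s * (u * N)) in h'; last by ring.
    rewrite tu mulNr; lra.
  + have := hc2 _ ((GoodZ hA) t^-1 _ _ Ap); rewrite /=.
    set N := `|t^-1 *: d + x0| => h.
    have e : d + t *: x0 = t *: (t^-1 *: d + x0).
      by rewrite scalerDr scalerA divff ?gt_eqF // scale1r.
    rewrite e normrZ gtr0_norm // -/N.
    have h' := ler_wpM2l (ltW tlt) h.
    rewrite mulrBr (mulrA t t^-1) divff ?gt_eqF // mul1r in h'.
    rewrite (_ : t * (s * N) = s * (t * N)) in h'; last by ring.
    lra.
Qed.

Lemma HB_graph {R : realType} {X : normedModType R} (s : R) (G0 : set (X * R)) :
  0 <= s -> Good s G0 ->
  exists A, Good s A /\ G0 `<=` A /\ forall x, exists r, A (x, r).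
Proof.
move=> s0 hG0.
pose P := fun A : set (X * R) => A = set0 \/ (Good s A /\ G0 `<=` A).
have PG A : P A -> forall z, A z -> Good s A /\ G0 `<=` A.
  by case=> [->//|//].
have [A [PA Amax]] : exists A, P A /\ forall B, A `<` B -> ~ P B.
  apply: Zorn_bigcup => F FP Ftot.
  have [[A1 [FA1 [z1 A1z1]]]|nF] :=
    pselect (exists A, F A /\ exists z, A z); last first.
    left; apply/seteqP; split => // z [A FA Az]; exfalso; apply: nF.
    by exists A; split => //; exists z.
  have [gA1 G0A1] := PG _ (FP _ FA1) _ A1z1.
  have gU A z : F A -> A z -> Good s A := fun FA Az => (PG _ (FP _ FA) _ Az).1.
  right; split; last by move=> z /G0A1 h; exists A1.
  split.
  - move=> a p q [Ap FAp pin] [Aq FAq qin].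
    have [sub|sub] := Ftot _ _ FAp FAq.
    + exists Aq => //; have [lin _ _ _] := gU _ _ FAq qin.
      by apply: lin => //; apply: sub.
    + exists Ap => //; have [lin _ _ _] := gU _ _ FAp pin.
      by apply: lin => //; apply: sub.
  - by exists A1 => //; case: gA1.
  - by move=> r [A FA h]; have [_ _ fn _] := gU _ _ FA h; exact: fn.
  - by move=> p [A FA h]; have [_ _ _ dm] := gU _ _ FA h; exact: dm.
have [gA G0A] : Good s A /\ G0 `<=` A.
  case: PA => [A0|//]; exfalso; have hP : P G0 by rewrite /P; right; split. apply: (Amax G0 _ hP).
  rewrite A0; split => // sub; have [_ h _ _] := hG0.
  by have := sub _ h.
exists A; split => //; split => // x.
apply: contrapT => nx.
have [B [gB AB nBA]] := HB_step s0 gA nx.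
apply: (Amax B); first by split. by rewrite /P; right; split => //; apply: subset_trans AB.
Qed.

Lemma HB {R : realType} {X : normedModType R} (s : R) (G0 : set (X * R)) :
  0 <= s -> Good s G0 ->
  exists g : X -> R, [/\ (forall a x y, g (a *: x + y) = a * g x + g y),
    (forall x, g x <= s * `|x|) & (forall p, G0 p -> g p.1 = p.2)].
Proof.
move=> s0 hG0; have [A [gA [G0A tot]]] := HB_graph s0 hG0.
pose g x := xget 0 [set r | A (x, r)].
have gP x : A (x, g x) by apply: xgetPex (tot x).
have gE x r : A (x, r) -> g x = r by move=> h; apply: (GoodU gA (gP x) h).
have [lin _ _ dom] := gA.
exists g; split.
- by move=> a x y; apply: gE; exact: (lin a (x, g x) (y, g y)).
- by move=> x; exact: (dom _ (gP x)).
- by move=> [x r] /G0A h; apply: gE.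
Qed.


Lemma lip_cont {R : realType} {V W : normedModType R} (f : V -> W) (k : R) :
  (forall x y, `|f x - f y| <= k * `|x - y|) -> continuous f.
Proof.
move=> h x; apply/cvgrPdist_lt => e e0.
have k1 : 0 < `|k| + 1 by rewrite ltr_pwDr // normr_ge0.
near=> z.
have hz : `|x - z| < e / (`|k| + 1).
  near: z; apply: (@cvgr_dist_lt _ _ _ _ _ id x); last exact: divr_gt0.
  exact: cvg_id.
apply: le_lt_trans (h x z) _.
apply: le_lt_trans (ler_norm _) _; rewrite normrM normr_id.
apply: (@le_lt_trans _ _ ((`|k| + 1) * `|x - z|)).
  by apply: ler_wpM2r; [exact: normr_ge0 | rewrite lerDl].
by rewrite -ltr_pdivlMl // mulrC.
Unshelve. all: by end_near.
Qed.

Definition Lmap {R : realType} {X : normedModType R} (m : nat) (nu : 'I_m -> X)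
  (c : 'rV[R]_m) : X := \sum_(j < m) c ord0 j *: nu j.

Lemma Lmap_lin {R : realType} {X : normedModType R} (m : nat) (nu : 'I_m -> X) a c d :
  Lmap nu (a *: c + d) = a *: Lmap nu c + Lmap nu d.
Proof.
rewrite /Lmap scaler_sumr -big_split /=; apply: eq_bigr => j _.
by rewrite !mxE scalerDl scalerA.
Qed.



Lemma coord_le {R : realType} (m : nat) (c : 'rV[R]_m) j : `|c ord0 j| <= `|c|.
Proof.
have -> : `|c| = mx_norm c by []. rewrite mx_normrE; apply/bigmax_geP; right => /=.
by exists (ord0, j).
Qed.

Lemma Lmap_bound {R : realType} {X : normedModType R} (m : nat) (nu : 'I_m -> X) c :
  `|Lmap nu c| <= (\sum_(j < m) `|nu j|) * `|c|.
Proof.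
rewrite /Lmap mulr_suml; apply: le_trans (ler_norm_sum _ _ _) _.
apply: ler_sum => j _; rewrite normrZ mulrC ler_wpM2l //.
exact: coord_le.
Qed.

Lemma Lmap0 {R : realType} {X : normedModType R} (m : nat) (nu : 'I_m -> X) :
  Lmap nu 0 = 0.
Proof. by rewrite /Lmap big1 // => j _; rewrite mxE scale0r. Qed.

Lemma LmapZ {R : realType} {X : normedModType R} (m : nat) (nu : 'I_m -> X) a c :
  Lmap nu (a *: c) = a *: Lmap nu c.
Proof. by rewrite -[a *: c]addr0 Lmap_lin Lmap0 addr0. Qed.

Lemma LmapB {R : realType} {X : normedModType R} (m : nat) (nu : 'I_m -> X) c d :
  Lmap nu (c - d) = Lmap nu c - Lmap nu d.
Proof.
have -> : c - d = (-1) *: d + c by rewrite scaleN1r addrC.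
by rewrite Lmap_lin scaleN1r addrC.
Qed.

Lemma Lmap_cont {R : realType} {X : normedModType R} (m : nat) (nu : 'I_m -> X) :
  continuous (Lmap nu).
Proof.
apply: (@lip_cont _ _ _ _ (\sum_(j < m) `|nu j|)) => x y.
by rewrite -LmapB; apply: Lmap_bound.
Qed.

Lemma Lmap_lower {R : realType} {X : normedModType R} (m : nat) (nu : 'I_m -> X) :
  lin_indep nu -> exists2 k, 0 < k & forall c, k * `|c| <= `|Lmap nu c|.
Proof.
move=> hind.
have L0 c : Lmap nu c = 0 -> c = 0.
  move=> h; have := hind (fun j => c ord0 j) h => hc.
  by apply/rowP => j; rewrite mxE hc.
pose S := [set c : 'rV[R]_m | `|c| = 1].
have inS c : c != 0 -> S (`|c|^-1 *: c).
  move=> c0; rewrite /S /= normrZ ger0_norm ?invr_ge0 ?normr_ge0 //.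
  by rewrite mulVf // normr_eq0.
have [S0|nS] := pselect (S !=set0); last first.
  exists 1 => // c; have [->|c0] := eqVneq c 0; first by rewrite normr0 mulr0.
  by exfalso; apply: nS; exists (`|c|^-1 *: c); apply: inS.
have cS : compact S.
  apply: bounded_closed_compact.
    exists 1; split; first exact: num_real.
    by move=> M M1 c Sc; rewrite /= Sc ltW.
  apply: (@preimage_closed _ _ (fun c : 'rV[R]_m => `|c|) [set x : R | x = 1]); last exact: closed_eq.
  by move=> ? _; exact: norm_continuous.
have ch : {within S, continuous (fun c => `|Lmap nu c|)}.
  apply: continuous_subspaceT => x.
  apply: continuous_comp; first exact: Lmap_cont.
  exact: norm_continuous.
have [c0 c0S hmin] := compact_EVT_min S0 cS ch.
have c0S' : S c0 by rewrite inE in c0S.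
exists `|Lmap nu c0|.
  rewrite normr_gt0; apply/eqP => /L0 h; move: c0S'; rewrite /S /= h normr0.
  by move/eqP; rewrite eq_sym oner_eq0.
move=> c; have [->|c0n] := eqVneq c 0; first by rewrite normr0 mulr0.
have := hmin _ (mem_set (inS _ c0n)); rewrite LmapZ normrZ.
rewrite ger0_norm ?invr_ge0 ?normr_ge0 //.
have nc : 0 < `|c| by rewrite normr_gt0.
by rewrite ler_pdivlMl // mulrC.
Qed.

Lemma attain {R : realType} {X : normedModType R} (m : nat) (nu : 'I_m -> X)
  (fh : X -> R) : lin_indep nu -> dual_space X fh ->
  exists c, `|Lmap nu c| <= 1 /\
    forall d, fh (Lmap nu d) <= fh (Lmap nu c) * `|Lmap nu d|.
Proof.
move=> hind hf; have [k k0 hk] := Lmap_lower hind.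
pose K := [set c : 'rV[R]_m | `|Lmap nu c| <= 1].
have K0 : K !=set0 by exists 0; rewrite /K /= Lmap0 normr0.
have cK : compact K.
  apply: bounded_closed_compact.
    exists k^-1; split; first exact: num_real.
    move=> M M1 c Kc; rewrite /=; apply: ltW; apply: le_lt_trans M1.
    by rewrite -[k^-1]mulr1 ler_pdivlMl //; apply: le_trans (hk c) Kc.
  apply: (@preimage_closed _ _ (fun c => `|Lmap nu c|) [set x : R | x <= 1]); last exact: closed_le.
  move=> ? _; apply: continuous_comp; first exact: Lmap_cont.
  exact: norm_continuous.
have ch : {within K, continuous (fun c => fh (Lmap nu c))}.
  apply: continuous_subspaceT => x.
  apply: continuous_comp; first exact: Lmap_cont.
  exact: hf.2.
have [c cK' hmax] := compact_EVT_max K0 cK ch.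
have cK'' : K c by rewrite inE in cK'.
exists c; split => // d.
have [Ld0|Ldn] := eqVneq (Lmap nu d) 0.
  by rewrite Ld0 (ds0 hf) normr0 mulr0.
have nd : 0 < `|Lmap nu d| by rewrite normr_gt0.
have Kd : K (`|Lmap nu d|^-1 *: d).
  have ni : 0 <= `|Lmap nu d|^-1 by rewrite invr_ge0 ltW.
  rewrite /K /= LmapZ normrZ ger0_norm //.
  by rewrite mulVf ?gt_eqF.
have := hmax _ (mem_set Kd); rewrite LmapZ (dsZ hf).
by rewrite ler_pdivrMl // mulrC.
Qed.


Lemma ds_of {R : realType} {X : normedModType R} (g : X -> R) (s : R) :
  (forall a x y, g (a *: x + y) = a * g x + g y) -> (forall x, g x <= s * `|x|) ->
  dual_space X g /\ forall x, `|g x| <= s * `|x|.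
Proof.
move=> lin dom.
have g0 : g 0 = 0.
  have := lin 1 0 0; rewrite scale1r addr0 mul1r => /eqP.
  by rewrite -subr_eq subrr eq_sym => /eqP.
have gZ a x : g (a *: x) = a * g x by rewrite -[a *: x]addr0 lin g0 addr0.
have gB x z : g (x - z) = g x - g z.
  by rewrite -scaleN1r addrC lin mulN1r addrC.
have ab x : `|g x| <= s * `|x|.
  rewrite ler_norml dom andbT lerNl -mulN1r -gZ scaleN1r.
  by apply: le_trans (dom _) _; rewrite normrN.
split => //; split => //; apply: (@lip_cont _ _ _ _ s) => x z.
by rewrite -gB; apply: ab.
Qed.

Lemma ds_sum {R : realType} {X : normedModType R} (m : nat) (nu : 'I_m -> X)
  (g : X -> R) (c : 'I_m -> R) : dual_space X g ->
  g (\sum_(j < m) c j *: nu j) = \sum_(j < m) c j * g (nu j).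
Proof.
move=> hg; rewrite (big_morph g (dsD hg) (ds0 hg)).
by apply: eq_bigr => j _; rewrite (dsZ hg).
Qed.

Lemma Lmap_delta {R : realType} {X : normedModType R} (m : nat) (nu : 'I_m -> X) j :
  Lmap nu (\row_i ((i == j)%:R : R)) = nu j.
Proof.
rewrite /Lmap (bigD1 j) //= mxE eqxx scale1r big1 ?addr0 // => i /negbTE h.
by rewrite mxE h scale0r.
Qed.

Lemma S_lb {R : realType} {X : normedModType R} (m : nat) (nu : 'I_m -> X) y :
  has_lbound [set dual_norm g | g in interp_set nu y].
Proof. by exists 0 => _ [g [hg _] <-]; exact: dn_ge0. Qed.

Lemma backward {R : realType} {X : normedModType R} (m : nat)
  (nu : 'I_m -> X) (y : 'I_m -> R) (fhat : X -> R) (c : 'I_m -> R) (mu : X -> R) :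
  interp_set nu y fhat ->
  subdiff (fun v : X => `|v|) (\sum_(j < m) c j *: nu j) mu ->
  fhat = (fun x : X => `|\sum_(j < m) c j *: nu j| * mu x) ->
  is_mni_solution nu y fhat.
Proof.
set nu0 := \sum_(j < m) c j *: nu j.
move=> hint [hmu hsub] hfe; split => //.
have [hf hfy] := hint.
set ga := `|nu0|.
have mu0 : mu nu0 = ga.
  apply/eqP; rewrite eq_le; apply/andP; split.
    have := hsub (nu0 + nu0); rewrite addrK -mulr2n normrMn.
    by rewrite /ga; lra.
  have := hsub 0; rewrite sub0r (dsN hmu) normr0; rewrite /ga; lra.
have mub z : `|mu z| <= `|z|.
  have h1 w : mu w <= `|w|.
    have := hsub w; rewrite (dsB hmu) mu0 -/ga; lra.
  rewrite ler_norml h1 andbT lerNl -(dsN hmu) -(normrN z); exact: h1.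
have ga0 : 0 <= ga by apply: normr_ge0.
have fb : dual_norm fhat <= ga.
  apply: dn_le => x x1; rewrite hfe normrM ger0_norm //.
  by rewrite -[leRHS]mulr1 ler_wpM2l //; apply: le_trans (mub x) x1.
have lbS : lbound [set dual_norm g | g in interp_set nu y] (dual_norm fhat).
  move=> _ [g [hg hgy] <-]; apply: le_trans fb _.
  have e : g nu0 = fhat nu0.
    by rewrite /nu0 !ds_sum //; apply: eq_bigr => j _; rewrite hgy hfy.
  have h1 : fhat nu0 = ga * ga by rewrite hfe mu0.
  have h2 : g nu0 <= dual_norm g * ga.
    by apply: le_trans (ler_norm _) _; apply: dn_bound.
  have [g0|gpos] := eqVneq ga 0; first by rewrite g0; apply: dn_ge0.
  have gp : 0 < ga by rewrite lt_neqAle eq_sym gpos ga0.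
  by rewrite -(ler_pM2r gp) -h1 -e.
apply/eqP; rewrite eq_le; apply/andP; split.
  by apply: lb_le_inf => //; exists (dual_norm fhat), fhat.
by apply: ge_inf; [exists (dual_norm fhat) | exists fhat].
Qed.

Lemma forward {R : realType} {X : normedModType R} (m : nat)
  (nu : 'I_m -> X) (y : 'I_m -> R) (fhat : X -> R) :
  lin_indep nu -> is_mni_solution nu y fhat ->
  exists c : 'I_m -> R, exists mu : X -> R,
    subdiff (fun v : X => `|v|) (\sum_(j < m) c j *: nu j) mu /\
    fhat = (fun x : X => `|\sum_(j < m) c j *: nu j| * mu x).
Proof.
move=> hind [hint hmin]; have [hf hfy] := hint.
have [cs [cs1 hcs]] := attain hind hf.
set s := fhat (Lmap nu cs) in hcs.
have s0 : 0 <= s.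
  have := hcs (- cs); rewrite -scaleN1r LmapZ (dsZ hf) normrZ normrN1 mul1r.
  have := normr_ge0 (Lmap nu cs); rewrite -/s; nra.
pose G0 := [set p : X * R | exists d, p = (Lmap nu d, fhat (Lmap nu d))].
have gG0 : Good s G0.
  split.
  - move=> a _ _ [d1 ->] [d2 ->]; exists (a *: d1 + d2).
    by rewrite /= Lmap_lin (ds_lin hf).
  - by exists 0; rewrite Lmap0 (ds0 hf).
  - by move=> r [d [e1 ->]]; rewrite -e1 (ds0 hf).
  - by move=> _ [d ->] /=; apply: hcs.
have [g [glin gdom gG]] := HB s0 gG0.
have [hg gab] := ds_of glin gdom.
have gS : interp_set nu y g.
  split => // j; rewrite -hfy -(Lmap_delta nu j).
  by apply: (gG (_, _)); exists (\row_i ((i == j)%:R : R)).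
have gn : dual_norm g <= s.
  apply: dn_le => x x1; apply: le_trans (gab x) _.
  by rewrite -[leRHS]mulr1 ler_wpM2l.
have fn : dual_norm fhat <= s.
  apply: le_trans gn; rewrite hmin; apply: ge_inf; first exact: S_lb.
  by exists g.
have [s00|spos] := eqVneq s 0.
  have f0 x : fhat x = 0.
    apply/normr0_eq0/eqP; rewrite eq_le normr_ge0 andbT.
    apply: le_trans (dn_bound hf x) _.
    have : dual_norm fhat = 0 by apply/eqP; rewrite eq_le dn_ge0 // andbT -s00.
    by move=> ->; rewrite mul0r.
  exists (fun=> 0), (fun=> 0).
  have e0 : \sum_(j < m) (0 : R) *: nu j = 0 by rewrite big1 // => j _; rewrite scale0r.
  rewrite e0; split; last by apply: funext => x; rewrite f0 normr0 mul0r.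
  split; last by move=> z; rewrite normr0 subr0 normr_ge0.
  by split; [move=> a x z; rewrite mulr0 addr0 | exact: cst_continuous].
have sp : 0 < s by rewrite lt_neqAle eq_sym spos s0.
have ncs : `|Lmap nu cs| = 1.
  apply/eqP; rewrite eq_le cs1 /=.
  have h1 : s <= dual_norm fhat * `|Lmap nu cs|.
    by apply: le_trans (ler_norm _) _; apply: dn_bound.
  have h2 : dual_norm fhat * `|Lmap nu cs| <= s * `|Lmap nu cs|.
    by apply: ler_wpM2r.
  by rewrite -(ler_pM2l sp) mulr1; apply: le_trans h1 h2.
exists (fun j => s * cs ord0 j), (fun x => fhat x / s).
have e : \sum_(j < m) (s * cs ord0 j) *: nu j = s *: Lmap nu cs.
  by rewrite /Lmap scaler_sumr; apply: eq_bigr => j _; rewrite scalerA.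
rewrite e normrZ ncs mulr1 ger0_norm //; split; last first.
  by apply: funext => x; field; rewrite gt_eqF.
split.
  split.
    by move=> a x z; rewrite (ds_lin hf); field; rewrite gt_eqF.
  apply: (@lip_cont _ _ _ _ (dual_norm fhat / s)) => x z.
  have si0 : 0 <= s^-1 by rewrite invr_ge0 ltW.
  rewrite -mulrBl -(dsB hf) normrM (ger0_norm si0) mulrAC.
  by apply: ler_wpM2r => //; exact: dn_bound.
move=> z; rewrite /= normrZ ncs mulr1 (ger0_norm s0) (dsB hf) (dsZ hf) -/s.
have hz : fhat z <= s * `|z|.
  by apply: le_trans (ler_norm _) _; apply: le_trans (dn_bound hf z) _; apply: ler_wpM2r.
rewrite mulrBl (mulrC s s) (mulfK spos) lerD2r.
by rewrite ler_pdivrMr // mulrC.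
Qed.


Unset Implicit Arguments.

Theorem mainTheorem7 (R : realType) (X : normedModType R) (m : nat)
  (nu : 'I_m -> X) (y : 'I_m -> R) (fhat : X -> R) :
  lin_indep nu -> dual_space X fhat ->
  (is_mni_solution nu y fhat <->
   (interp_set nu y fhat /\
    exists c : 'I_m -> R,
      let nu0 := \sum_(j < m) c j *: nu j in
      exists mu : X -> R,
        subdiff (fun v : X => `|v|) nu0 mu /\
        fhat = (fun x : X => `|nu0| * mu x))).
Proof.
move=> hind hf; split.
  move=> hsol; split; first exact: hsol.1.
  by have [c [mu [h1 h2]]] := forward hind hsol; exists c, mu.
by move=> [hint [c [mu [h1 h2]]]]; exact: (backward hint h1 h2).
Qed.
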